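(* Let $f:\mathbb{R}^n\to\mathbb{R}$ be a continuous loss function which is strictly convex and $L$-smooth, with global minimum $w^*$, and let $E(w):=f(w)-f(w^* )$. Consider sequences $(w_i)$ generated by the Loss-Guarded L2O algorithm using deterministic gradient descent with step size $\frac{\alpha}{L}$, $\alpha\in\,]0,2[$, as the guarding mechanism. Then $E$ is a Lyapunov function for such sequences, i.e.: (1) $E$ is continuous; (2) $E(w)=0$ if and only if $w=w^*$; (3) $E(w)>0$ if and only if $w\neq w^*$; (4) $E(w_{i+1})\le E(w_i)$ for all $i\in\mathbb{N}$.
   Context: Loss-Guarded L2O algorithm with deterministic gradient descent: at each step $i$, an arbitrary black-box rule proposes a point $y_i$, the fallback proposes $z_i=w_i-\frac{\alpha}{L}\nabla f(w_i)$, and $w_{i+1}=y_i$ if $f(y_i)<f(z_i)$, otherwise $w_{i+1}=z_i$. $f$ is $L$-smooth means $f(y)\le f(x)+\langle\nabla f(x),y-x\rangle+\frac{L}{2}\|y-x\|_2^2$ for all $x,y$. *)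

(* Defs.v *)
From HB Require Import structures.
From mathcomp Require Import all_boot all_order all_algebra.
From mathcomp Require Import all_classical all_reals all_analysis.
Set Implicit Arguments. Unset Strict Implicit. Unset Printing Implicit Defensive.
Import Order.TTheory GRing.Theory Num.Theory.
Import numFieldNormedType.Exports.
Local Open Scope ring_scope.

Definition dotv {R : realType} {n : nat} (u v : 'rV[R]_n) : R := (u *m v^T) 0 0.

Definition norm2sq {R : realType} {n : nat} (v : 'rV[R]_n) : R := dotv v v.

Definition is_gradient {R : realType} {n : nat}
  (f : 'rV[R]_n -> R) (g : 'rV[R]_n -> 'rV[R]_n) : Prop :=
  forall x, differentiable f x /\ forall v, 'd f x v = dotv (g x) v.

Definition strictly_convex {R : realType} {n : nat} (f : 'rV[R]_n -> R) : Prop :=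
  forall (x y : 'rV[R]_n) (t : R), x != y -> 0 < t < 1 ->
    f (t *: x + (1 - t) *: y) < t * f x + (1 - t) * f y.

Definition L_smooth {R : realType} {n : nat}
  (f : 'rV[R]_n -> R) (g : 'rV[R]_n -> 'rV[R]_n) (L : R) : Prop :=
  forall x y, f y <= f x + dotv (g x) (y - x) + L / 2 * norm2sq (y - x).

(* Loss-Guarded L2O with gradient-descent fallback: y is the arbitrary
   black-box proposal sequence, w the generated iterates. *)
Definition LG_L2O_GD {R : realType} {n : nat}
  (f : 'rV[R]_n -> R) (g : 'rV[R]_n -> 'rV[R]_n) (alpha L : R)
  (y w : nat -> 'rV[R]_n) : Prop :=
  forall i : nat,
    let z := w i - (alpha / L) *: g (w i) in
    w i.+1 = if f (y i) < f z then y i else z.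

(* Main.v *)
Require Import Defs.
From HB Require Import structures.
From mathcomp Require Import all_boot all_order all_algebra.
From mathcomp Require Import all_classical all_reals all_analysis.
From mathcomp Require Import ring lra.
Import Order.TTheory GRing.Theory Num.Theory.
Import numFieldNormedType.Exports.
Local Open Scope ring_scope.

Lemma dot_ge0 (R : realType) (n : nat) (u : 'rV[R]_n) : 0 <= dotv u u.
Proof.
rewrite /dotv !mxE; apply: sumr_ge0 => j _; rewrite !mxE -expr2 sqr_ge0 //.
Qed.

Lemma dotNZ (R : realType) (n : nat) (u v : 'rV[R]_n) (c : R) :
  dotv u (-(c *: v)) = - (c * dotv u v).
Proof.
rewrite /dotv !mxE mulr_sumr -sumrN; apply: eq_bigr => j _; rewrite !mxE; ring.
Qed.

Lemma norm2NZ (R : realType) (n : nat) (v : 'rV[R]_n) (c : R) :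
  norm2sq (-(c *: v)) = c ^+ 2 * norm2sq v.
Proof.
rewrite /norm2sq /dotv !mxE mulr_sumr; apply: eq_bigr => j _; rewrite !mxE; ring.
Qed.
Lemma T (R : realType) (L alpha c D A B: R) : 0 < L -> 0 < alpha -> alpha < 2 -> c = alpha / L -> 0 <= D ->
 A <= B + - (c * D) + L / 2 * (c ^+ 2 * D) -> A <= B.
Proof.
move=> L0 a0 a2 ec D0.
    have -> : L / 2 * (c ^+ 2 * D) = c * D * (alpha / 2).
      rewrite ec; field; rewrite gt_eqF //.
    have c0 : 0 < c by rewrite ec divr_gt0.
    have cD : 0 <= c * D by rewrite mulr_ge0 // ltW.
    have hK : c * D * (alpha / 2) <= c * D by rewrite ler_piMr //; lra.
    move: hK; set K := c * D; set K2 := K * (alpha / 2); lra.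
Qed.

Theorem theorem2 (R : realType) (n : nat) (f : 'rV[R]_n -> R)
  (grad : 'rV[R]_n -> 'rV[R]_n) (L alpha : R) (wstar : 'rV[R]_n)
  (y w : nat -> 'rV[R]_n) :
  continuous f ->
  strictly_convex f ->
  is_gradient f grad ->
  0 < L ->
  L_smooth f grad L ->
  (forall v, f wstar <= f v) ->
  0 < alpha < 2 ->
  LG_L2O_GD f grad alpha L y w ->
  let E := fun v => f v - f wstar in
  [/\ continuous E,
      (forall v, E v = 0 <-> v = wstar),
      (forall v, 0 < E v <-> v <> wstar)
    & (forall i : nat, E (w i.+1) <= E (w i))].
Proof.
move=> fc sc gr L0 Ls fmin /andP[a0 a2] alg E.
have Eeq : forall v, E v = 0 <-> v = wstar.
  move=> v; split; last by move=> ->; rewrite /E subrr.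
  move=> /eqP; rewrite subr_eq0 => /eqP Hv.
  apply/eqP; apply/negPn/negP => hne.
  have := sc v wstar (1/2) hne.
  have h12 : 0 < (1 / 2 : R) < 1 by apply/andP; split; lra.
  move=> /(_ h12); rewrite Hv => H.
  have H2 := le_lt_trans (fmin _) H.
  move: H2; generalize (f wstar) => q; lra.
split.
- move=> x; rewrite /E.
  have h : {for f x, continuous (fun r : R => r - f wstar)}.
    by apply: cvgB; [exact: cvg_id | exact: cvg_cst].
  exact: (continuous_comp (fc x) h).
- exact: Eeq.
- move=> v; split.
    by move=> H Hv; move: H; rewrite Hv /E subrr ltxx.
  move=> Hv; have := fmin v; rewrite /E le_eqVlt => /orP[/eqP H|]; last by rewrite subr_gt0.
  by exfalso; apply: Hv; apply/Eeq; rewrite /E H subrr.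
- move=> i; rewrite /E lerD2r.
  set x := w i; set c := alpha / L.
  have Hz : f (x - c *: grad x) <= f x.
    have := Ls x (x - c *: grad x).
    have -> : x - c *: grad x - x = - (c *: grad x) by rewrite addrAC subrr add0r.
    rewrite dotNZ norm2NZ.
    have D0 : 0 <= dotv (grad x) (grad x) by exact: dot_ge0.
    rewrite /norm2sq => HH; have TT := @T R L alpha c (dotv (grad x) (grad x)) (f (x - c *: grad x)) (f x) L0 a0 a2 erefl D0. exact: TT HH.
  rewrite (alg i) -/x -/c; case: ifP => // /ltW H; exact: le_trans H Hz.
Qed.
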